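(* Let $a,\alpha\in\mathcal{F}\setminus\{0\}$, $n$ a positive integer, and $f_n(x)=\alpha x^n$. (a) If $\operatorname{char}\mathcal{F}=0$, then for all $x,y\in D(a,|a|_\mathfrak{p}/q^{e+1})$, $|f_n(x)-f_n(y)|_\mathfrak{p}=|\alpha|_\mathfrak{p}|n|_\mathfrak{p}|a|_\mathfrak{p}^{n-1}|x-y|_\mathfrak{p}$, where $e$ is the ramification index of $\mathcal{F}/\mathbb{Q}_p$. (b) If $\operatorname{char}\mathcal{F}=p>0$, then for all $x,y\in D(a,|a|_\mathfrak{p}/q)$, $|f_n(x)-f_n(y)|_\mathfrak{p}=|\alpha|_\mathfrak{p}|a|_\mathfrak{p}^{\,n-p^{v_p(n)}}|x-y|_\mathfrak{p}^{\,p^{v_p(n)}}$. In particular, if $p\nmid n$, $f_n$ is scaling on $D(a,|a|_\mathfrak{p}/q)$ with scaling ratio $|\alpha|_\mathfrak{p}|a|_\mathfrak{p}^{n-1}$.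
   Context: $\mathcal{F}$ is a non-Archimedean local field, $q$ the cardinality of its residue field, $|\cdot|_\mathfrak{p}$ the normalized absolute value; $D(a,r)=\{x:|x-a|_\mathfrak{p}\le r\}$. When $\operatorname{char}\mathcal{F}=0$, $\mathcal{F}$ is a finite extension of $\mathbb{Q}_p$ with ramification index $e$, and for integers $k$, $v_\mathfrak{p}(k)=e\,v_p(k)$ where $v_p$ is the usual $p$-adic valuation on $\mathbb{Z}$; $|n|_\mathfrak{p}$ denotes the absolute value of the integer $n$ viewed in $\mathcal{F}$. $v_p(n)$ is the exponent of $p$ in $n$. A map is scaling with ratio $q^\lambda$ if $|f(x)-f(y)|_\mathfrak{p}=q^\lambda|x-y|_\mathfrak{p}$ for all $x,y$ in its domain. *)

(* Defs.v *)
From HB Require Import structures.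
From mathcomp Require Import all_boot all_order all_algebra.
Set Implicit Arguments. Unset Strict Implicit. Unset Printing Implicit Defensive.
Import Order.TTheory GRing.Theory Num.Theory.
Local Open Scope ring_scope.

(* A non-Archimedean local field is presented as a field F together with a
   normalized discrete valuation v : F -> int (only meaningful on nonzero
   elements) and the cardinality q of its residue field, such that F is
   complete and the residue field O/m is finite with q elements. *)

Section LocalField.
Variable F : fieldType.
Variable v : F -> int.
Variable q : nat.

Definition in_O (x : F) : Prop := x = 0 \/ (0 <= v x).
Definition in_m (x : F) : Prop := x = 0 \/ (0 < v x).

Definition absv (x : F) : rat := if x == 0 then 0 else (q%:R : rat) ^ (- v x).

Definition is_nonarch_local_field : Prop :=
  [/\
      (forall x y, x != 0 -> y != 0 -> v (x * y) = v x + v y),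
      (forall x y, x != 0 -> y != 0 -> x + y != 0 ->
          Num.min (v x) (v y) <= v (x + y)),
      (* normalized discrete: v is onto Z, realized by a uniformizer *)
      (exists pi : F, pi != 0 /\ v pi = 1),
      (* finite residue field with q elements: a complete system of
         q pairwise incongruent representatives of O/m *)
      (exists reps : seq F,
          [/\ size reps = q,
              (forall r, r \in reps -> in_O r),
              (forall i j, (i < q)%N -> (j < q)%N ->
                  in_m (nth 0 reps i - nth 0 reps j) -> i = j)
            & (forall x, in_O x -> exists2 r, r \in reps & in_m (x - r))])
    &
      (forall u : nat -> F,
          (forall k : nat, exists N : nat, forall m n : nat, (N <= m)%N -> (N <= n)%N ->
              absv (u m - u n) <= (q%:R : rat) ^ (- (k%:Z))) ->
          exists l : F, forall k : nat, exists N : nat, forall m : nat, (N <= m)%N ->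
              absv (u m - l) <= (q%:R : rat) ^ (- (k%:Z)))].

Definition disk (a : F) (r : rat) (x : F) : Prop := absv (x - a) <= r.

(* p is the residue characteristic: p prime and p lies in the maximal ideal
   (used in characteristic 0, where F is a finite extension of Q_p) *)
Definition residue_char (p : nat) : Prop := prime p /\ (0 < v p%:R).

(* ramification index over Q_p: e = v_p(p) *)
Definition ram_index (p : nat) : int := v p%:R.

Definition scaling_on (D : F -> Prop) (f : F -> F) (c : rat) : Prop :=
  forall x y, D x -> D y -> absv (f x - f y) = c * absv (x - y).

End LocalField.

Definition powmap (F : fieldType) (alpha : F) (n : nat) (x : F) : F := alpha * x ^+ n.

(* Main.v *)
Require Import Defs.
From HB Require Import structures.
From mathcomp Require Import all_boot all_order all_algebra.
From mathcomp Require Import zify ring lra.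
Import Order.TTheory GRing.Theory Num.Theory.
Set Implicit Arguments. Unset Strict Implicit. Unset Printing Implicit Defensive.
Local Open Scope ring_scope.

Definition vmul (F : fieldType) (v : F -> int) :=
  forall x y, x != 0 -> y != 0 -> v (x * y) = v x + v y.
Definition vmin (F : fieldType) (v : F -> int) :=
  forall x y, x != 0 -> y != 0 -> x + y != 0 -> Num.min (v x) (v y) <= v (x + y).
Definition vge (F : fieldType) (v : F -> int) (x : F) (c : int) := x = 0 \/ c <= v x.

Lemma v1 (F : fieldType) (v : F -> int) : vmul v -> v 1 = 0.
Proof. move=> hM; have := hM 1 1 (oner_neq0 _) (oner_neq0 _); rewrite mulr1; lia. Qed.

Lemma vN1 (F : fieldType) (v : F -> int) : vmul v -> v (-1) = 0.
Proof.
move=> hM; have n1 : (-1 : F) != 0 by rewrite oppr_eq0 oner_neq0.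
have := hM _ _ n1 n1; rewrite mulrNN mulr1 (v1 hM); lia.
Qed.

Lemma vN (F : fieldType) (v : F -> int) x : vmul v -> x != 0 -> v (- x) = v x.
Proof.
move=> hM x0; have n1 : (-1 : F) != 0 by rewrite oppr_eq0 oner_neq0.
by rewrite -mulN1r hM // (vN1 hM) add0r.
Qed.

Lemma vX (F : fieldType) (v : F -> int) x k : vmul v -> x != 0 -> v (x ^+ k) = k%:Z * v x.
Proof.
move=> hM x0; elim: k => [|k IH]; first by rewrite expr0 (v1 hM) mul0r.
rewrite exprS hM ?expf_neq0 // IH; lia.
Qed.

Lemma vge_le (F : fieldType) (v : F -> int) x c1 c2 : c1 <= c2 -> vge v x c2 -> vge v x c1.
Proof. move=> h [->|h2]; [by left|right; lia]. Qed.

Lemma vgeD (F : fieldType) (v : F -> int) x y c : vmin v ->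
  vge v x c -> vge v y c -> vge v (x + y) c.
Proof.
move=> hD hx hy.
case: (eqVneq x 0) => [->|x0]; first by rewrite add0r.
case: (eqVneq y 0) => [->|y0]; first by rewrite addr0.
case: (eqVneq (x + y) 0) => [->|s0]; first by left.
case: hx => [hx|hx]; first by rewrite hx eqxx in x0.
case: hy => [hy|hy]; first by rewrite hy eqxx in y0.
right; apply: le_trans (hD x y x0 y0 s0); rewrite le_min hx hy //.
Qed.

Lemma vgeN (F : fieldType) (v : F -> int) x c : vmul v -> vge v x c -> vge v (- x) c.
Proof.
move=> hM [->|h]; first by rewrite oppr0; left.
case: (eqVneq x 0) => [->|x0]; first by rewrite oppr0; left.
by right; rewrite vN.
Qed.

Lemma vgeM (F : fieldType) (v : F -> int) x y c1 c2 : vmul v ->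
  vge v x c1 -> vge v y c2 -> vge v (x * y) (c1 + c2).
Proof.
move=> hM [->|hx]; first by rewrite mul0r; left.
move=> [->|hy]; first by rewrite mulr0; left.
case: (eqVneq x 0) => [->|x0]; first by rewrite mul0r; left.
case: (eqVneq y 0) => [->|y0]; first by rewrite mulr0; left.
right; rewrite hM //; lia.
Qed.

Lemma vge_nat (F : fieldType) (v : F -> int) k : vmul v -> vmin v -> vge v (k%:R) 0.
Proof.
move=> hM hD; elim: k => [|k IH]; first by left.
rewrite mulrS; apply: vgeD => //; right; rewrite (v1 hM) //.
Qed.

Lemma vge_sum (F : fieldType) (v : F -> int) k (f : nat -> F) c : vmin v ->
  (forall i : 'I_k, vge v (f i) c) -> vge v (\sum_(i < k) f i) c.
Proof.
move=> hD; elim: k f => [|k IH] f h; first by rewrite big_ord0; left.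
rewrite big_ord_recr /=; apply: vgeD => //.
  by apply: (IH f) => i; have := h (widen_ord (leqnSn k) i).
by have := h ord_max.
Qed.

Lemma vge_strict (F : fieldType) (v : F -> int) a b : vmul v -> vmin v ->
  a != 0 -> vge v b (v a + 1) -> a + b != 0 /\ v (a + b) = v a.
Proof.
move=> hM hD a0 hb.
case: (eqVneq b 0) => [->|b0]; first by rewrite addr0.
case: hb => [hb|hb]; first by rewrite hb eqxx in b0.
have ab0 : a + b != 0.
  apply/eqP => h; have /eqP hb' : a == - b by rewrite -addr_eq0 h.
  by move: hb; rewrite hb' vN //; lia.
split => //.
have h1 := hD a b a0 b0 ab0.
have nb0 : - b != 0 by rewrite oppr_eq0.
have s0 : (a + b) + - b != 0 by rewrite addrK.
have h2 := hD (a + b) (- b) ab0 nb0 s0.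
rewrite addrK vN // in h2.
move: h1 h2; rewrite !ge_min => /orP[h1|h1] /orP[h2|h2]; lia.
Qed.

Lemma unit_coprime (F : fieldType) (v : F -> int) p m : vmul v -> vmin v ->
  prime p -> coprime p m -> (forall w, vge v ((w * p)%:R) 1) ->
  m%:R != 0 :> F /\ v (m%:R) = 0.
Proof.
move=> hM hD pp cpm hw.
have [a _] := Bezoutl m (prime_gt0 pp).
rewrite (eqP cpm) => /dvdnP [w hwp].
have e1 : (1 : F) = (w * p)%:R - a%:R * m%:R by rewrite -hwp natrD natrM addrK.
have key : ~ vge v (m%:R : F) 1.
  move=> hm.
  have : vge v (1 : F) 1.
    rewrite e1; apply: vgeD => //; apply: vgeN => //.
    have := vgeM hM (vge_nat a hM hD) hm; rewrite add0r //.
  by case=> [/eqP|]; rewrite ?oner_eq0 // (v1 hM).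
have m0 : m%:R != 0 :> F by apply/eqP => h; apply: key; left.
split => //.
have [h|h] := vge_nat m hM hD; first by rewrite h eqxx in m0.
suff : ~ 1 <= v m%:R by lia.
by move=> h'; apply: key; right.
Qed.



Lemma keyb (F : fieldType) (v : F -> int) (y d : F) n' : vmul v -> vmin v ->
  let T := fun i => y ^+ (n'.+1 - i) * d ^+ i *+ 'C(n'.+1, i) in
  T 1%N != 0 -> (forall i : 'I_n', vge v (T i.+2) (v (T 1%N) + 1)) ->
  (y + d) ^+ n'.+1 - y ^+ n'.+1 != 0 /\ v ((y + d) ^+ n'.+1 - y ^+ n'.+1) = v (T 1%N).
Proof.
move=> hM hD T T10 hT.
have E : (y + d) ^+ n'.+1 - y ^+ n'.+1 = T 1%N + \sum_(i < n') T i.+2.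
  rewrite addrC exprDn big_ord_recl big_ord_recl /= subn0 bin0 expr0 mulr1 mulr1n.
  rewrite addKr.
  done.
rewrite E; apply: (vge_strict hM hD T10).
by apply: (vge_sum (f := fun i => T i.+2)).
Qed.

Lemma absv_def (F : fieldType) (v : F -> int) q x : x != 0 -> absv v q x = (q%:R : rat) ^ (- v x).
Proof. by move=> x0; rewrite /absv (negbTE x0). Qed.

Lemma absv0 (F : fieldType) (v : F -> int) q : absv v q 0 = 0.
Proof. by rewrite /absv eqxx. Qed.

Lemma absv_eqv (F : fieldType) (v : F -> int) q x y : x != 0 -> y != 0 -> v x = v y ->
  absv v q x = absv v q y.
Proof. by move=> x0 y0 e; rewrite !absv_def // e. Qed.

Lemma absvM (F : fieldType) (v : F -> int) q x y : vmul v -> (0 < q)%N ->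
  absv v q (x * y) = absv v q x * absv v q y.
Proof.
move=> hM q0.
case: (eqVneq x 0) => [->|x0]; first by rewrite mul0r absv0 mul0r.
case: (eqVneq y 0) => [->|y0]; first by rewrite mulr0 absv0 mulr0.
rewrite !absv_def ?mulf_neq0 // hM // opprD expfzDr //.
by rewrite pnatr_eq0 -lt0n.
Qed.

Lemma absvX (F : fieldType) (v : F -> int) q x k : vmul v -> (0 < q)%N ->
  absv v q (x ^+ k) = absv v q x ^+ k.
Proof.
move=> hM q0; elim: k => [|k IH].
  by rewrite !expr0 absv_def ?oner_neq0 // (v1 hM) oppr0 expr0z.
by rewrite !exprS absvM // IH.
Qed.

Lemma absv_v0 (F : fieldType) (v : F -> int) q x : x != 0 -> v x = 0 -> absv v q x = 1.
Proof. by move=> x0 e; rewrite absv_def // e oppr0 expr0z. Qed.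

Lemma q_gt1 (F : fieldType) (v : F -> int) q : is_nonarch_local_field v q -> (1 < q)%N.
Proof.
case=> hM hD _ [reps [hs hO hinj hrep]] _.
have e1 := v1 hM.
have [r0 r0in h0] := hrep 0 (or_introl erefl).
have o1 : in_O v (1 : F) by right; rewrite e1.
have [r1 r1in h1] := hrep 1 o1.
rewrite ltnNge; apply/negP => hq.
have er : r0 = r1.
  clear hO hinj hrep; move: r0in r1in hs; case: reps => [|r [|r' s]] //=.
    by rewrite !inE => /eqP -> /eqP ->.
  by move=> _ _ hs; rewrite -hs in hq.
have vm : forall x, in_m v x -> vge v x 1.
  by move=> x [->|h]; [left|right; lia].
have : vge v (1 : F) 1.
  have -> : (1 : F) = (1 - r1) - (0 - r0) by rewrite er; ring.
  apply: (vgeD hD); first exact: vm.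
  by apply: (vgeN hM); apply: vm.
by case=> [/eqP|]; rewrite ?oner_eq0 // e1.
Qed.

Lemma disk_vge (F : fieldType) (v : F -> int) q a x (c : int) : (1 < q)%N -> a != 0 ->
  disk v q a (absv v q a / (q%:R : rat) ^ c) x -> vge v (x - a) (v a + c).
Proof.
move=> q1 a0; rewrite /disk.
case: (eqVneq (x - a) 0) => [->|xa]; first by left.
have qn0 : (q%:R : rat) != 0 by rewrite pnatr_eq0 -lt0n ltnW.
have q1' : 1 < (q%:R : rat) by rewrite ltr1n.
rewrite !absv_def // invr_expz -expfzDr // ler_eXz2l // => h.
right; lia.
Qed.



Lemma arithZ (A D N C C' e i r k : int) : 0 <= i -> 
  N + C' = k * e + C -> 0 <= C' -> A + (e + 1) <= D -> 1 <= e -> k <= i + 1 ->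
  (i + 1 + r) * A + D + N + 1 <= r * A + (i + 2) * D + C.
Proof.
move=> hi hb hc hd he hki.
have h1 : 0 <= (i + 1) * (D - A - e - 1) by apply: mulr_ge0; lra.
have h2 : 0 <= e * (i + 1 - k) by apply: mulr_ge0; lra.
have hC : C = N + C' - k * e by rewrite hb; ring.
rewrite -subr_le0.
have -> : (i + 1 + r) * A + D + N + 1 - (r * A + (i + 2) * D + C)
   = - ((i + 1) * (D - A - e - 1)) - e * (i + 1 - k) - C' - i by rewrite hC; ring.
lra.
Qed.

Lemma partA (F : fieldType) (v : F -> int) (q : nat)
    (hF : is_nonarch_local_field v q) (a alpha : F) (n : nat) :
  a != 0 -> (0 < n)%N -> [pchar F] =i pred0 ->
     forall p : nat, residue_char v p ->
     forall x y : F,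
       disk v q a (absv v q a / (q%:R : rat) ^ (ram_index v p + 1)) x ->
       disk v q a (absv v q a / (q%:R : rat) ^ (ram_index v p + 1)) y ->
       absv v q (powmap alpha n x - powmap alpha n y)
         = absv v q alpha * absv v q (n%:R) * absv v q a ^+ (n - 1)
           * absv v q (x - y).
Proof.
move=> a0 n0 hc p [pp vp] x y hx hy.
have q1 := q_gt1 hF; have q0 : (0 < q)%N by apply: ltnW.
case: hF => hM hD _ _ _.
have hxa := disk_vge q1 a0 hx; have hya := disk_vge q1 a0 hy.
move: hxa hya; rewrite /ram_index; set e := v p%:R => hxa hya.
have nz : forall k, (0 < k)%N -> k%:R != 0 :> F.
  by move=> k k0; have /pcharf0P h := hc; rewrite h -lt0n.
case: (eqVneq x y) => [<-|xy]; first by rewrite !subrr absv0 mulr0.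
set d := x - y.
have d0 : d != 0 by rewrite subr_eq0.
have hd : vge v d (v a + (e + 1)).
  have -> : d = (x - a) - (y - a) by rewrite /d; ring.
  exact: (vgeD hD hxa (vgeN hM hya)).
have e1 : 1 <= e by rewrite /e; move: vp; clear; lia.
have [y0 vy] : y != 0 /\ v y = v a.
  have hya1 : vge v (y - a) (v a + 1) by apply: vge_le hya; move: e1; clear; lia.
  by have := vge_strict hM hD a0 hya1; rewrite addrC subrK.
have vd : v a + (e + 1) <= v d by case: hd => [/eqP|//]; rewrite (negbTE d0).
have hxyd : x = y + d by rewrite /d addrC subrK.
rewrite /powmap -mulrBr absvM // hxyd.
case: n n0 nz => // n' _ nz.
have T1E : y ^+ (n'.+1 - 1) * d ^+ 1 *+ 'C(n'.+1, 1) = y ^+ n' * d * n'.+1%:R.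
  by rewrite subn1 /= expr1 bin1 mulr_natr.
have T10 : y ^+ (n'.+1 - 1) * d ^+ 1 *+ 'C(n'.+1, 1) != 0.
  by rewrite T1E !mulf_neq0 ?expf_neq0 ?nz.
have hT : forall i : 'I_n', vge v (y ^+ (n'.+1 - i.+2) * d ^+ i.+2 *+ 'C(n'.+1, i.+2))
    (v (y ^+ (n'.+1 - 1) * d ^+ 1 *+ 'C(n'.+1, 1)) + 1).
  move=> i; rewrite T1E -mulr_natr.
  have Cpos : (0 < 'C(n'.+1, i.+2))%N by rewrite bin_gt0; have := ltn_ord i; clear; lia.
  have C'pos : (0 < 'C(n', i.+1))%N by rewrite bin_gt0; have := ltn_ord i; clear; lia.
  have [m' cm hj] := pfactor_coprime pp (ltn0Sn i.+1).
  move: hj; set k := logn p i.+2 => hj.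
  have hw : forall w, vge v ((w * p)%:R : F) 1.
    move=> w; rewrite natrM.
    have hp1 : vge v (p%:R : F) 1 by right; rewrite -/e; move: e1; clear; lia.
    by have := vgeM hM (vge_nat w hM hD) hp1; rewrite add0r.
  have [m0 vm] := unit_coprime hM hD pp cm hw.
  have p0 := nz _ (prime_gt0 pp).
  have vj : v (i.+2%:R : F) = k%:Z * e.
    rewrite hj natrM natrX hM ?expf_neq0 // vX // vm; clear; lia.
  have kj : (k < i.+2)%N.
    have h1 : (p ^ k <= i.+2)%N by apply: dvdn_leq => //; rewrite hj dvdn_mull.
    have h2 := ltn_expl k (prime_gt1 pp); move: h1 h2; clear; lia.
  have hb := mul_bin_diag n'.+1 i.+1.
  have hbF : (n'.+1%:R : F) * 'C(n', i.+1)%:R = i.+2%:R * 'C(n'.+1, i.+2)%:R.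
    by rewrite -!natrM hb.
  have vb := f_equal v hbF.
  rewrite !hM ?nz // in vb.
  have vC' : 0 <= v ('C(n', i.+1)%:R : F).
    by case: (vge_nat 'C(n', i.+1) hM hD) => [/eqP|//]; rewrite (negbTE (nz _ C'pos)).
  have yj0 : y ^+ (n'.+1 - i.+2) != 0 by rewrite expf_neq0.
  have dj0 : d ^+ i.+2 != 0 by rewrite expf_neq0.
  have vL : v (y ^+ (n'.+1 - i.+2) * d ^+ i.+2 * 'C(n'.+1, i.+2)%:R)
      = (n'.+1 - i.+2)%:Z * v y + i.+2%:Z * v d + v ('C(n'.+1, i.+2)%:R : F).
    rewrite (hM _ _ (mulf_neq0 yj0 dj0) (nz _ Cpos)).
    by rewrite (hM _ _ yj0 dj0) !vX.
  have yn0 : y ^+ n' != 0 by rewrite expf_neq0.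
  have vR : v (y ^+ n' * d * n'.+1%:R) = n'%:Z * v y + v d + v (n'.+1%:R : F).
    rewrite (hM _ _ (mulf_neq0 yn0 d0) (nz _ (ltn0Sn n'))).
    by rewrite (hM _ _ yn0 d0) !vX.
  rewrite /vge; right; rewrite vL vR.
  move: (ltn_ord i) vb vj kj vC'; rewrite vy.
  move: (nat_of_ord i) => i' hi vb vj kj vC'.
  have [r hr] : exists r, n' = (i'.+1 + r)%N by exists (n' - i'.+1)%N; move: hi; clear; lia.
  rewrite hr in vb *.
  have -> : ((i'.+1 + r).+1 - i'.+2 = r)%N by clear; lia.
  rewrite hr in vC'.
  rewrite vj in vb.
  have hk : (k%:Z <= i'%:Z + 1) by move: kj; clear; lia.
  have hi0 : 0 <= i'%:Z by clear; lia.
  have H := @arithZ _ _ _ _ _ _ i' r%:Z _ hi0 vb vC' vd e1 hk.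
  have E1 : ((i'.+1 + r)%N : int) = i'%:Z + 1 + r%:Z by clear; lia.
  have E2 : (i'.+2 : int) = i'%:Z + 2 by clear; lia.
  by rewrite E1 E2.
have [X0 vX] := keyb (y:=y) (d:=d) (n':=n') hM hD T10 hT.
rewrite (absv_eqv q X0 T10 vX) T1E !absvM // absvX // (absv_eqv q y0 a0 vy) subn1 /=.
ring.
Qed.



Lemma arithB (A D P i r : int) : 1 <= P -> A + 1 <= D -> 0 <= i ->
  (i + 1 + r) * (P * A) + P * D + 0 + 1 <= r * (P * A) + (i + 2) * (P * D) + 0.
Proof.
move=> hP hd hi.
have h1 : 0 <= (i + 1) * (P * (D - A - 1)) by apply: mulr_ge0; [lra|apply: mulr_ge0; lra].
have h2 : 0 <= i * P by apply: mulr_ge0; lra.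
rewrite -subr_le0.
have -> : (i + 1 + r) * (P * A) + P * D + 0 + 1 - (r * (P * A) + (i + 2) * (P * D) + 0)
   = - ((i + 1) * (P * (D - A - 1))) - i * P - P + 1 by ring.
lra.
Qed.

Lemma partB1 (F : fieldType) (v : F -> int) (q : nat)
    (hF : is_nonarch_local_field v q) (a alpha : F) (n : nat) :
  a != 0 -> (0 < n)%N ->
  forall p : nat, p \in [pchar F] ->
     forall x y : F,
        disk v q a (absv v q a / q%:R) x ->
        disk v q a (absv v q a / q%:R) y ->
        absv v q (powmap alpha n x - powmap alpha n y)
          = absv v q alpha * absv v q a ^+ (n - p ^ logn p n)
            * absv v q (x - y) ^+ (p ^ logn p n).
Proof.
move=> a0 n0 p hp x y hx hy.
have q1 := q_gt1 hF; have q0 : (0 < q)%N by apply: ltnW.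
case: hF => hM hD _ _ _.
have hr : absv v q a / q%:R = absv v q a / (q%:R : rat) ^ (1 : int) by rewrite expr1z.
rewrite hr in hx hy.
have hxa := disk_vge q1 a0 hx; have hya := disk_vge q1 a0 hy.
have pp := pcharf_prime hp.
have [m cm hn] := pfactor_coprime pp n0.
move: hn; set k := logn p n => hn.
set P := (p ^ k)%N.
have P0 : (0 < P)%N by rewrite expn_gt0 prime_gt0.
have hnat : [pchar F].-nat P by rewrite /P pnatX pnatE // hp.
case: (eqVneq x y) => [<-|xy].
  by rewrite !subrr absv0 expr0n /= eqn0Ngt P0 /= mulr0.
set d := x - y.
have d0 : d != 0 by rewrite subr_eq0.
have hd : vge v d (v a + 1).
  have -> : d = (x - a) - (y - a) by rewrite /d; ring.
  exact: (vgeD hD hxa (vgeN hM hya)).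
have [y0 vy] : y != 0 /\ v y = v a.
  by have := vge_strict hM hD a0 hya; rewrite addrC subrK.
have vd : v a + 1 <= v d by case: hd => [/eqP|//]; rewrite (negbTE d0).
have hxyd : x = y + d by rewrite /d addrC subrK.
rewrite /powmap -mulrBr absvM // hn mulnC !exprM hxyd exprDn_pchar //.
set Y := y ^+ P; set D := d ^+ P.
have Y0 : Y != 0 by rewrite expf_neq0.
have D0 : D != 0 by rewrite expf_neq0.
have vY : v Y = P%:Z * v a by rewrite vX // vy.
have vD : v D = P%:Z * v d by rewrite vX.
case: m cm hn => [|m'] cm hn; first by move: n0; rewrite hn.
have hw : forall w, vge v ((w * p)%:R : F) 1 by move=> w; left; rewrite natrM (pcharf0 hp) mulr0.
have [mu vmu] := unit_coprime hM hD pp cm hw.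
have T1E : Y ^+ (m'.+1 - 1) * D ^+ 1 *+ 'C(m'.+1, 1) = Y ^+ m' * D * m'.+1%:R.
  by rewrite subn1 /= expr1 bin1 mulr_natr.
have T10 : Y ^+ (m'.+1 - 1) * D ^+ 1 *+ 'C(m'.+1, 1) != 0.
  by rewrite T1E !mulf_neq0 ?expf_neq0.
have hT : forall i : 'I_m', vge v (Y ^+ (m'.+1 - i.+2) * D ^+ i.+2 *+ 'C(m'.+1, i.+2))
    (v (Y ^+ (m'.+1 - 1) * D ^+ 1 *+ 'C(m'.+1, 1)) + 1).
  move=> i; rewrite T1E -mulr_natr.
  have yj0 : Y ^+ (m'.+1 - i.+2) != 0 by rewrite expf_neq0.
  have dj0 : D ^+ i.+2 != 0 by rewrite expf_neq0.
  have yn0 : Y ^+ m' != 0 by rewrite expf_neq0.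
  have vR : v (Y ^+ m' * D * m'.+1%:R) = m'%:Z * v Y + v D + 0.
    rewrite (hM _ _ (mulf_neq0 yn0 D0) mu) vmu.
    by rewrite (hM _ _ yn0 D0) !vX.
  have vL : v (Y ^+ (m'.+1 - i.+2) * D ^+ i.+2) = (m'.+1 - i.+2)%:Z * v Y + i.+2%:Z * v D.
    by rewrite (hM _ _ yj0 dj0) !vX.
  have h0 : vge v (Y ^+ (m'.+1 - i.+2) * D ^+ i.+2) (v (Y ^+ (m'.+1 - i.+2) * D ^+ i.+2)).
    by right.
  apply: vge_le (vgeM hM h0 (vge_nat _ hM hD)).
  rewrite vL vR vY vD.
  move: (ltn_ord i); move: (nat_of_ord i) => i' hi.
  have [r hr0] : exists r, m' = (i'.+1 + r)%N by exists (m' - i'.+1)%N; move: hi; clear; lia.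
  rewrite hr0.
  have -> : ((i'.+1 + r).+1 - i'.+2 = r)%N by clear; lia.
  have hP : 1 <= P%:Z by move: P0; clear; lia.
  have hi0 : 0 <= i'%:Z by clear; lia.
  have H := @arithB (v a) (v d) P%:Z i' r hP vd hi0.
  have E1 : ((i'.+1 + r)%N : int) = i'%:Z + 1 + r%:Z by clear; lia.
  have E2 : (i'.+2 : int) = i'%:Z + 2 by clear; lia.
  by rewrite E1 E2.
have [X0 vX'] := keyb (y:=Y) (d:=D) (n':=m') hM hD T10 hT.
rewrite (absv_eqv q X0 T10 vX') T1E !absvM // !absvX // (absv_v0 q mu vmu) mulr1.
rewrite (absv_eqv q y0 a0 vy).
have -> : (P * m'.+1 - P = P * m')%N by rewrite mulnS addKn.
rewrite exprM; ring.
Qed.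

Unset Implicit Arguments.

Theorem lemma4p1 (F : fieldType) (v : F -> int) (q : nat)
    (hF : is_nonarch_local_field v q) (a alpha : F) (n : nat) :
  a != 0 -> alpha != 0 -> (0 < n)%N ->
  (* (a) characteristic 0, p the residue characteristic, e = ramification index *)
  ([pchar F] =i pred0 ->
     forall p : nat, residue_char v p ->
     forall x y : F,
       disk v q a (absv v q a / (q%:R : rat) ^ (ram_index v p + 1)) x ->
       disk v q a (absv v q a / (q%:R : rat) ^ (ram_index v p + 1)) y ->
       absv v q (powmap alpha n x - powmap alpha n y)
         = absv v q alpha * absv v q (n%:R) * absv v q a ^+ (n - 1)
           * absv v q (x - y))
  /\
  (* (b) characteristic p > 0 *)
  (forall p : nat, p \in [pchar F] ->
     (forall x y : F,
        disk v q a (absv v q a / q%:R) x ->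
        disk v q a (absv v q a / q%:R) y ->
        absv v q (powmap alpha n x - powmap alpha n y)
          = absv v q alpha * absv v q a ^+ (n - p ^ logn p n)
            * absv v q (x - y) ^+ (p ^ logn p n))
     /\
     (~~ (p %| n)%N ->
        scaling_on v q (disk v q a (absv v q a / q%:R)) (powmap alpha n)
          (absv v q alpha * absv v q a ^+ (n - 1)))).
Proof.
move=> a0 al0 n0; split.
  by move=> hc p hp x y hx hy; exact: (partA hF alpha a0 n0 hc hp hx hy).
move=> p hp; split.
  by move=> x y hx hy; exact: (partB1 hF alpha a0 n0 hp hx hy).
move=> hnd x y hx hy.
have hk : logn p n = 0%N.
  have pp := pcharf_prime hp.
  have [m cm hn] := pfactor_coprime pp n0.
  apply/eqP; rewrite -leqn0 leqNgt; apply/negP => hk0.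
  move/negP: hnd; apply; rewrite hn -(prednK hk0) expnS.
  by rewrite dvdn_mull // dvdn_mulr.
have := partB1 hF alpha a0 n0 hp hx hy.
by rewrite hk expn0 expr1.
Qed.
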